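(* For every bipartite state $\rho$ on $\mathcal{H}^A\otimes\mathcal{H}^B$ ($\dim\mathcal{H}^A=m$, $\dim\mathcal{H}^B=n$), the geometric discord satisfies $$D_G(\rho)=\frac{2}{m^2n}\Big[\mathrm{Tr}\,G-\max_{\{|k\rangle\}}\sum_{k=1}^m\vec{\mu}_k^{\mathrm t}G\vec{\mu}_k\Big],$$ where $G=\vec{x}\vec{x}^{\mathrm t}+\frac{2}{n}TT^{\mathrm t}$, the maximum is over all orthonormal bases $\{|k\rangle\}_{k=1}^m$ of $\mathcal{H}^A$, and $\vec{\mu}_k=\frac{\sqrt2}{m}\vec{\alpha}_k$ with $\vec{\alpha}_k\in\mathbb{R}^{m^2-1}$ the coherence vector of $|k\rangle\langle k|$, i.e. $|k\rangle\langle k|=\frac1m(\mathbb{I}+\vec{\alpha}_k\cdot\hat\lambda^A)$. In particular $D_G$ does not depend on the coherence vector $\vec{y}$ of $B$.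
   Context: Generators $\hat\lambda_i^A$ ($i=1,\dots,m^2-1$) of $SU(m)$ and $\hat\lambda_j^B$ of $SU(n)$ are Hermitian, traceless, with $\mathrm{Tr}(\hat\lambda_i\hat\lambda_j)=2\delta_{ij}$. For $\rho$, $x_i=\frac{m}{2}\mathrm{Tr}[(\hat\lambda_i^A\otimes\mathbb{I})\rho]$, $y_j=\frac{n}{2}\mathrm{Tr}[(\mathbb{I}\otimes\hat\lambda_j^B)\rho]$, $t_{ij}=\frac{mn}{4}\mathrm{Tr}[(\hat\lambda_i^A\otimes\hat\lambda_j^B)\rho]$, $T=(t_{ij})$. The geometric discord is $D_G(\rho)=\min_\chi\mathrm{Tr}(\rho-\chi)^2$ over zero-discord states $\chi=\sum_{k=1}^m p_k|k\rangle\langle k|\otimes\rho_k^B$ ($\{|k\rangle\}$ orthonormal basis of $\mathcal{H}^A$, $p_k$ probabilities, $\rho_k^B$ states on $\mathcal{H}^B$). *)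

(* Defs.v *)
From HB Require Import structures.
From mathcomp Require Import all_boot all_order all_algebra.
From mathcomp Require Import complex mxtens.
From mathcomp Require Import reals.
Set Implicit Arguments. Unset Strict Implicit. Unset Printing Implicit Defensive.
Import Order.TTheory GRing.Theory Num.Theory.
Local Open Scope ring_scope.

Definition adjmx (C : numClosedFieldType) (p q : nat) (A : 'M[C]_(p, q)) : 'M[C]_(q, p) :=
  (map_mx Num.conj A)^T.

Definition hermitian (C : numClosedFieldType) (p : nat) (A : 'M[C]_p) : Prop :=
  adjmx A = A.

Definition psd (C : numClosedFieldType) (p : nat) (A : 'M[C]_p) : Prop :=
  forall v : 'cV[C]_p, 0 <= (adjmx v *m A *m v) 0 0.

Definition state (C : numClosedFieldType) (p : nat) (A : 'M[C]_p) : Prop :=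
  [/\ hermitian A, psd A & \tr A = 1].

Definition su_generators (C : numClosedFieldType) (p N : nat)
    (l : 'I_N -> 'M[C]_p) : Prop :=
  [/\ forall i, hermitian (l i),
      forall i, \tr (l i) = 0 &
      forall i j, \tr (l i *m l j) = 2 * (i == j)%:R].

Definition orthonormal_basis (C : numClosedFieldType) (p : nat)
    (e : 'I_p -> 'cV[C]_p) : Prop :=
  forall k l, (adjmx (e k) *m e l) 0 0 = (k == l)%:R.

Definition proj (C : numClosedFieldType) (p : nat) (v : 'cV[C]_p) : 'M[C]_p :=
  v *m adjmx v.

Definition zero_discord (C : numClosedFieldType) (m n : nat) (chi : 'M[C]_(m * n)) : Prop :=
  exists (e : 'I_m -> 'cV[C]_m) (pr : 'I_m -> C) (sig : 'I_m -> 'M[C]_n),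
    [/\ orthonormal_basis e,
        (forall k, 0 <= pr k), \sum_k pr k = 1,
        (forall k, state (sig k)) &
        chi = \sum_k pr k *: (proj (e k) *t sig k)].

Definition hs_dist2 (C : numClosedFieldType) (p : nat) (A B : 'M[C]_p) : C :=
  \tr ((A - B) *m (A - B)).

Definition coherence_vector (C : numClosedFieldType) (m N : nat)
    (l : 'I_N -> 'M[C]_m) (P : 'M[C]_m) (alpha : 'cV[C]_N) : Prop :=
  (forall i, alpha i 0 \is Num.real) /\
  P = (m%:R)^-1 *: (1%:M + \sum_i alpha i 0 *: l i).

Definition xvec (C : numClosedFieldType) (m n NA : nat)
    (lA : 'I_NA -> 'M[C]_m) (rho : 'M[C]_(m * n)) : 'cV[C]_NA :=
  \col_i (m%:R / 2 * \tr ((lA i *t (1%:M : 'M[C]_n)) *m rho)).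

Definition corrmx (C : numClosedFieldType) (m n NA NB : nat)
    (lA : 'I_NA -> 'M[C]_m) (lB : 'I_NB -> 'M[C]_n) (rho : 'M[C]_(m * n))
    : 'M[C]_(NA, NB) :=
  \matrix_(i, j) ((m * n)%:R / 4 * \tr ((lA i *t lB j) *m rho)).

Definition Gmx (C : numClosedFieldType) (m n NA NB : nat)
    (lA : 'I_NA -> 'M[C]_m) (lB : 'I_NB -> 'M[C]_n) (rho : 'M[C]_(m * n))
    : 'M[C]_NA :=
  xvec lA rho *m (xvec lA rho)^T
  + (2 / n%:R) *: (corrmx lA lB rho *m (corrmx lA lB rho)^T).

Definition basis_score (C : numClosedFieldType) (m NA : nat)
    (G : 'M[C]_NA) (alpha : 'I_m -> 'cV[C]_NA) : C :=
  \sum_k (let mu := (sqrtC 2 / m%:R) *: alpha k in ((mu^T *m G *m mu) 0 0)).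

(* Main.v *)
Require Import Defs.
From HB Require Import structures.
From mathcomp Require Import all_boot all_order all_algebra.
From mathcomp Require Import complex mxtens.
From mathcomp Require Import reals.
From mathcomp Require Import ring lra.
From mathcomp Require all_classical all_analysis.
Set Implicit Arguments. Unset Strict Implicit. Unset Printing Implicit Defensive.
Import Order.TTheory GRing.Theory Num.Theory.
Local Open Scope ring_scope.

Section Gen.
Variable C : numClosedFieldType.

Lemma adjmxE p q (A : 'M[C]_(p,q)) i j : adjmx A i j = Num.conj (A j i).
Proof. by rewrite /adjmx !mxE. Qed.

Lemma hermP p (A : 'M[C]_p) : Defs.hermitian A -> forall i j, A i j = Num.conj (A j i).
Proof. by move=> hA i j; rewrite -[in LHS]hA; exact: adjmxE. Qed.

Lemma qformE p (v : 'cV[C]_p) (M : 'M_p) :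
  (adjmx v *m M *m v) 0 0 = \sum_i \sum_j Num.conj (v i 0) * M i j * v j 0.
Proof.
rewrite mxE exchange_big /=; apply: eq_bigr => i _.
rewrite mxE big_distrl /=; apply: eq_bigr => j _.
by rewrite adjmxE.
Qed.

Lemma sum_idx m n (F : 'I_(m*n) -> C) :
  \sum_r F r = \sum_a \sum_b F (mxtens_index (a,b)).
Proof.
rewrite pair_big /= (reindex (@mxtens_index m n)) /=.
  by apply: eq_bigr => -[a b].
by exists (@mxtens_unindex m n) => x _; [apply: mxtens_indexK | apply: mxtens_unindexK].
Qed.

Definition red m n (X : 'M[C]_m) (rho : 'M[C]_(m*n)) : 'M[C]_n :=
  \matrix_(b, d) \sum_a \sum_c X c a * rho (mxtens_index (a,b)) (mxtens_index (c,d)).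

Lemma T1 m n (X : 'M[C]_m) (Y : 'M[C]_n) rho :
  \tr ((X *t Y) *m rho) = \tr (Y *m red X rho).
Proof.
rewrite /mxtrace sum_idx.
transitivity (\sum_c \sum_d \sum_a \sum_b X c a * Y d b * rho (mxtens_index (a,b)) (mxtens_index (c,d))).
  apply: eq_bigr => c _; apply: eq_bigr => d _.
  rewrite mxE sum_idx; apply: eq_bigr => a _; apply: eq_bigr => b _.
  by rewrite tensmxE.
rewrite exchange_big /=; apply: eq_bigr => d _.
rewrite mxE exchange_big /=.
transitivity (\sum_a \sum_b \sum_c X c a * Y d b * rho (mxtens_index (a,b)) (mxtens_index (c,d))).
  by apply: eq_bigr => a _; rewrite exchange_big.
rewrite exchange_big /=; apply: eq_bigr => b _.
rewrite mxE big_distrr /=; apply: eq_bigr => a _.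
rewrite big_distrr /=; apply: eq_bigr => c _.
by rewrite mulrA [Y d b * _]mulrC.
Qed.


Lemma complete p (l : 'I_(p ^ 2 - 1) -> 'M[C]_p) : (0 < p)%N -> su_generators l ->
  forall Z, Z = (\tr Z / p%:R) *: 1%:M + \sum_i (\tr (l i *m Z) / 2) *: l i.
Proof.
move=> p0 [lH l0 l2] Z.
set N := (p ^ 2 - 1)%N.
pose f (j : 'I_N.+1) : 'M[C]_p := if unlift ord0 j is Some i then l i else 1%:M.
pose c (j : 'I_N.+1) : C := if unlift ord0 j is Some i then 2 else p%:R.
have cnz j : c j != 0.
  rewrite /c; case: unliftP => [i _|_]; by rewrite pnatr_eq0 // -lt0n.
have orth j k : \tr (f j *m f k) = (j == k)%:R * c j.
  rewrite /f /c; case: (unliftP ord0 j) => [i ->|->]; case: (unliftP ord0 k) => [i' ->|->].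
  - by rewrite l2 (inj_eq (@lift_inj _ _)) mulrC.
  - by rewrite mulmx1 l0 eq_sym (negbTE (neq_lift _ _)) mul0r.
  - by rewrite mul1mx l0 (negbTE (neq_lift _ _)) mul0r.
  - by rewrite mulmx1 mxtrace1 eqxx mul1r.
pose X := [tuple f j | j < N.+1].
have Xj (j : 'I_N.+1) : X`_j = f j by rewrite nth_mktuple.
have coef (k : 'I_N.+1 -> C) j :
    \tr (f j *m \sum_i k i *: X`_i) = k j * c j.
  rewrite mulmx_sumr raddf_sum /=.
  rewrite (bigD1 j) //= big1 ?addr0.
    by rewrite Xj -scalemxAr mxtraceZ orth eqxx mul1r.
  move=> i ij; rewrite Xj -scalemxAr mxtraceZ orth.
  by rewrite eq_sym (negbTE ij) mul0r mulr0.
have freeX : free X.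
  apply/freeP => k Hk j; have := coef k j; rewrite Hk mulmx0 linear0.
  by move/esym/eqP; rewrite mulf_eq0 (negbTE (cnz j)) orbF => /eqP.
have bX : basis_of fullv X.
  rewrite basisEfree freeX subvf dimvf size_tuple /= dim_matrix.
  by rewrite /N -mulnn subn1 prednK // muln_gt0 p0.
have ZX : Z \in <<X>>%VS by rewrite (span_basis bX) memvf.
pose k j := coord X j Z.
have eZ : Z = \sum_i k i *: X`_i := coord_span ZX.
have k0 : k ord0 = \tr Z / p%:R.
  have := coef k ord0; rewrite -eZ /f /c unlift_none mul1mx => ->.
  by rewrite mulfK // pnatr_eq0 -lt0n.
have kl i : k (lift ord0 i) = \tr (l i *m Z) / 2.
  have := coef k (lift ord0 i); rewrite -eZ /f /c liftK => ->.
  by rewrite mulfK // pnatr_eq0.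
rewrite {1}eZ big_ord_recl Xj k0 /f unlift_none; congr (_ + _).
by apply: eq_bigr => i _; rewrite Xj kl /f liftK.
Qed.


Lemma trmulE p (A B : 'M[C]_p) : \tr (A *m B) = \sum_i \sum_j A i j * B j i.
Proof. by apply: eq_bigr => i _; rewrite mxE. Qed.

Lemma parseval p (l : 'I_(p ^ 2 - 1) -> 'M[C]_p) : (0 < p)%N -> su_generators l ->
  forall Y Z, \tr (Y *m Z) = \tr Y * \tr Z / p%:R + \sum_i \tr (l i *m Y) * \tr (l i *m Z) / 2.
Proof.
move=> p0 sl Y Z; rewrite {1}(complete p0 sl Z) mulmxDr mulmx_sumr mxtraceD raddf_sum /=.
rewrite -scalemxAr mulmx1 mxtraceZ mulrC mulrA; congr (_ + _).
apply: eq_bigr => i _; rewrite -scalemxAr mxtraceZ [\tr (Y *m _)]mxtrace_mulC.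
ring.
Qed.

Definition blk m n (rho : 'M[C]_(m*n)) b d : 'M[C]_m :=
  \matrix_(a, c) rho (mxtens_index (a,b)) (mxtens_index (c,d)).

Lemma redE m n (X : 'M[C]_m) (rho : 'M[C]_(m*n)) b d :
  red X rho b d = \tr (X *m blk rho b d).
Proof.
rewrite mxE trmulE exchange_big; apply: eq_bigr => a _; apply: eq_bigr => c _.
by rewrite mxE.
Qed.

Lemma T2 m n (l : 'I_(m ^ 2 - 1) -> 'M[C]_m) (rho sig : 'M[C]_(m*n)) :
  (0 < m)%N -> su_generators l ->
  \tr (rho *m sig) = \tr (red 1%:M rho *m red 1%:M sig) / m%:R
     + \sum_i \tr (red (l i) rho *m red (l i) sig) / 2.
Proof.
move=> m0 sl.
transitivity (\sum_b \sum_d \tr (blk rho b d *m blk sig d b)).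
  rewrite trmulE sum_idx.
  transitivity (\sum_a \sum_b \sum_c \sum_d rho (mxtens_index (a,b)) (mxtens_index (c,d))
                 * sig (mxtens_index (c,d)) (mxtens_index (a,b))).
    by apply: eq_bigr => a _; apply: eq_bigr => b _; rewrite sum_idx.
  rewrite exchange_big; apply: eq_bigr => b _ /=.
  transitivity (\sum_a \sum_d \sum_c rho (mxtens_index (a,b)) (mxtens_index (c,d))
                 * sig (mxtens_index (c,d)) (mxtens_index (a,b))).
    by apply: eq_bigr => a _; rewrite exchange_big.
  rewrite exchange_big; apply: eq_bigr => d _ /=.
  rewrite trmulE; apply: eq_bigr => a _; apply: eq_bigr => c _.
  by rewrite !mxE.
have E1 b d : \tr (blk rho b d *m blk sig d b) =
    red 1%:M rho b d * red 1%:M sig d b / m%:R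
    + \sum_i red (l i) rho b d * red (l i) sig d b / 2.
  rewrite (parseval m0 sl) !redE !mul1mx; congr (_ + _).
  by apply: eq_bigr => i _; rewrite !redE.
under eq_bigr do under eq_bigr do rewrite E1.
rewrite !trmulE.
under eq_bigr do rewrite big_split /=.
rewrite big_split /= mulr_suml; congr (_ + _).
  by apply: eq_bigr => b _; rewrite mulr_suml.
symmetry; under eq_bigr do rewrite trmulE mulr_suml.
under eq_bigr do under eq_bigr do rewrite mulr_suml.
rewrite exchange_big; apply: eq_bigr => b _ /=; rewrite exchange_big.
by apply: eq_bigr => d _.
Qed.


Lemma red_add m n (X Y : 'M[C]_m) (rho : 'M[C]_(m*n)) :
  red (X + Y) rho = red X rho + red Y rho.
Proof.
apply/matrixP => b d; rewrite !mxE -big_split /=; apply: eq_bigr => a _.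
rewrite -big_split /=; apply: eq_bigr => c _; by rewrite mxE mulrDl.
Qed.

Lemma red_scale m n (k : C) (X : 'M[C]_m) (rho : 'M[C]_(m*n)) :
  red (k *: X) rho = k *: red X rho.
Proof.
apply/matrixP => b d; rewrite !mxE mulr_sumr; apply: eq_bigr => a _.
rewrite mulr_sumr; apply: eq_bigr => c _; by rewrite mxE mulrA.
Qed.

Lemma red0 m n (rho : 'M[C]_(m*n)) : red 0 rho = 0.
Proof. by rewrite -(scale0r 0) red_scale scale0r. Qed.

Lemma red_sum m n I (r : seq I) (F : I -> 'M[C]_m) (rho : 'M[C]_(m*n)) :
  red (\sum_(i <- r) F i) rho = \sum_(i <- r) red (F i) rho.
Proof.
elim: r => [|x r IH]; first by rewrite !big_nil red0.
by rewrite !big_cons red_add IH.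
Qed.

Lemma herm_red m n (X : 'M[C]_m) (rho : 'M[C]_(m*n)) :
  Defs.hermitian X -> Defs.hermitian rho -> Defs.hermitian (red X rho).
Proof.
move=> hX hr; apply/matrixP => b d; rewrite adjmxE !mxE rmorph_sum /=.
rewrite exchange_big /=; apply: eq_bigr => a _; rewrite rmorph_sum /=.
apply: eq_bigr => c _; rewrite rmorphM /= -hermP // -hermP //.
Qed.

Lemma herm_diag_real p (M : 'M[C]_p) i : Defs.hermitian M -> M i i \is Num.real.
Proof. by move=> h; rewrite CrealE -(hermP h). Qed.

Lemma tr_herm_real p (M : 'M[C]_p) : Defs.hermitian M -> \tr M \is Num.real.
Proof. by move=> h; apply: rpred_sum => i _; apply: herm_diag_real. Qed.

Lemma tr_mul_herm_real p (A B : 'M[C]_p) :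
  Defs.hermitian A -> Defs.hermitian B -> \tr (A *m B) \is Num.real.
Proof.
move=> hA hB; rewrite CrealE; apply/eqP.
rewrite trmulE rmorph_sum /= exchange_big /=; apply: eq_bigr => i _.
rewrite rmorph_sum; apply: eq_bigr => j _ /=.
by rewrite rmorphM /= -hermP // -hermP // mulrC.
Qed.

Lemma trsq_ge0 p (Y : 'M[C]_p) : Defs.hermitian Y -> 0 <= \tr (Y *m Y).
Proof.
move=> h; rewrite trmulE; apply: sumr_ge0 => i _; apply: sumr_ge0 => j _.
by rewrite [Y j i](hermP h) mul_conjC_ge0.
Qed.

Lemma trsq_real p (Y : 'M[C]_p) : Defs.hermitian Y -> \tr (Y *m Y) \is Num.real.
Proof. by move=> h; apply: ger0_real; apply: trsq_ge0. Qed.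

Lemma adj_delta p (b : 'I_p) : adjmx (delta_mx b 0 : 'cV[C]_p) = delta_mx 0 b.
Proof. by apply/matrixP => i j; rewrite adjmxE !mxE rmorph_nat andbC. Qed.

Lemma qdelta p (M : 'M[C]_p) i j :
  (adjmx (delta_mx i 0 : 'cV[C]_p) *m M *m (delta_mx j 0 : 'cV[C]_p)) 0 0 = M i j.
Proof. by rewrite adj_delta -rowE -colE !mxE. Qed.

Lemma psd_diag p (M : 'M[C]_p) b : psd M -> 0 <= M b b.
Proof. by move=> h; have := h (delta_mx b 0); rewrite qdelta. Qed.

Lemma adjmxD p q (A B : 'M[C]_(p,q)) : adjmx (A + B) = adjmx A + adjmx B.
Proof. by apply/matrixP => i j; rewrite !(mxE, adjmxE) rmorphD. Qed.

Lemma adjmxZ p q k (A : 'M[C]_(p,q)) : adjmx (k *: A) = Num.conj k *: adjmx A.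
Proof. by apply/matrixP => i j; rewrite !(mxE, adjmxE) rmorphM. Qed.

Lemma mxE00D (A B : 'M[C]_1) : (A + B) 0 0 = A 0 0 + B 0 0.
Proof. by rewrite mxE. Qed.
Lemma mxE00Z k (A : 'M[C]_1) : (k *: A) 0 0 = k * A 0 0.
Proof. by rewrite mxE. Qed.

Lemma psd0 p (M : 'M[C]_p) : Defs.hermitian M -> psd M -> (forall b, M b b = 0) -> M = 0.
Proof.
move=> hM pM d0; apply/matrixP => b d; rewrite mxE.
have [->|bd] := eqVneq b d; first exact: d0.
set x := M b d.
have := pM ((- x) *: delta_mx b 0 + delta_mx d 0).
rewrite adjmxD adjmxZ !(mulmxDl, mulmxDr) -!scalemxAl -!scalemxAr.
rewrite !mxE00D !mxE00Z.
rewrite !qdelta !d0 (hermP hM d b) -/x !mulr0 !add0r addr0.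
rewrite rmorphN /= !mulNr (mulrC _^* x) -opprD oppr_ge0 -mulr2n => h.
apply/eqP; rewrite -mul_conjC_eq0 eq_le mul_conjC_ge0 andbT.
by move: h; rewrite pmulrn_lle0.
Qed.

Lemma sum_proj m (e : 'I_m -> 'cV[C]_m) :
  orthonormal_basis e -> \sum_k proj (e k) = 1%:M.
Proof.
move=> oe.
pose U : 'M[C]_m := \matrix_(a, k) e k a 0.
have h : adjmx U *m U = 1%:M.
  apply/matrixP => k l; rewrite [RHS]mxE -(oe k l) !mxE; apply: eq_bigr => a _.
  by rewrite !adjmxE !mxE.
have h2 := mulmx1C h.
rewrite -h2; apply/matrixP => a c; rewrite summxE !mxE; apply: eq_bigr => k _.
by rewrite /proj mxE big_ord1 !adjmxE !mxE.
Qed.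

Lemma adj_e_e m (e : 'I_m -> 'cV[C]_m) k l :
  orthonormal_basis e -> adjmx (e k) *m e l = (k == l)%:R%:M.
Proof.
by move=> oe; apply/matrixP => i j; rewrite !ord1 oe mxE /= mulr1n.
Qed.

Lemma proj_mul m (e : 'I_m -> 'cV[C]_m) k l :
  orthonormal_basis e -> proj (e k) *m proj (e l) = (k == l)%:R *: proj (e k).
Proof.
move=> oe; rewrite /proj mulmxA -(mulmxA (e k)) adj_e_e // mul_mx_scalar.
rewrite -scalemxAl; have [->|kl] := eqVneq k l; first by rewrite !scale1r.
by rewrite !scale0r.
Qed.

Lemma tr_proj m (e : 'I_m -> 'cV[C]_m) k :
  orthonormal_basis e -> \tr (proj (e k)) = 1.
Proof.
by move=> oe; rewrite /proj mxtrace_mulC adj_e_e // eqxx mxtrace_scalar.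
Qed.

Lemma herm_proj m (v : 'cV[C]_m) : Defs.hermitian (proj v).
Proof.
apply/matrixP => i j; rewrite adjmxE !mxE rmorph_sum; apply: eq_bigr => k _.
by rewrite !adjmxE rmorphM /= conjCK mulrC.
Qed.

Lemma alpha_tr m (l : 'I_(m ^ 2 - 1) -> 'M[C]_m) P alpha :
  (0 < m)%N -> su_generators l -> coherence_vector l P alpha ->
  forall i, alpha i 0 = m%:R / 2 * \tr (l i *m P).
Proof.
move=> m0 [lH l0 l2] [_ hP] i.
rewrite hP -scalemxAr mxtraceZ mulmxDr mulmx1 mxtraceD l0 add0r mulmx_sumr raddf_sum /=.
rewrite (bigD1 i) //= big1 ?addr0; last first.
  by move=> j ji; rewrite -scalemxAr mxtraceZ l2 eq_sym (negbTE ji) mulr0 mulr0.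
rewrite -scalemxAr mxtraceZ l2 eqxx mulr1.
have mn0 : (m%:R : C) != 0 by rewrite pnatr_eq0 -lt0n.
by field.
Qed.

Lemma tr_tens m n (A : 'M[C]_m) (B : 'M[C]_n) : \tr (A *t B) = \tr A * \tr B.
Proof.
rewrite /mxtrace sum_idx mulr_suml; apply: eq_bigr => a _.
by rewrite mulr_sumr; apply: eq_bigr => b _; rewrite tensmxE.
Qed.

Lemma tensmxZl m n p q k (A : 'M[C]_(m,n)) (B : 'M[C]_(p,q)) :
  (k *: A) *t B = k *: (A *t B).
Proof. by apply/matrixP => i j; rewrite !mxE mulrA. Qed.

Lemma trbil p I J (a : I -> C) (b : J -> C) (rI : seq I) (rJ : seq J)
    (A : I -> 'M[C]_p) (B : J -> 'M[C]_p) :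
  \tr ((\sum_(i <- rI) a i *: A i) *m (\sum_(j <- rJ) b j *: B j))
    = \sum_(i <- rI) \sum_(j <- rJ) a i * b j * \tr (A i *m B j).
Proof.
rewrite mulmx_suml raddf_sum /=; apply: eq_bigr => i _.
rewrite mulmx_sumr raddf_sum /=; apply: eq_bigr => j _.
by rewrite -scalemxAl -scalemxAr !mxtraceZ mulrA.
Qed.

Lemma dist_decomp m n (e : 'I_m -> 'cV[C]_m) (p : 'I_m -> C) (s : 'I_m -> 'M[C]_n)
    (rho : 'M[C]_(m*n)) :
  orthonormal_basis e ->
  hs_dist2 rho (\sum_k p k *: (proj (e k) *t s k)) =
    \tr (rho *m rho) - \sum_k \tr (red (proj (e k)) rho *m red (proj (e k)) rho)
    + \sum_k \tr ((red (proj (e k)) rho - p k *: s k) *m (red (proj (e k)) rho - p k *: s k)).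
Proof.
move=> oe; set r := fun k => red (proj (e k)) rho.
set chi := \sum_k p k *: _.
have hcr : \tr (chi *m rho) = \sum_k p k * \tr (s k *m r k).
  rewrite /chi mulmx_suml raddf_sum /=; apply: eq_bigr => k _.
  by rewrite -scalemxAl mxtraceZ T1.
have hcc : \tr (chi *m chi) = \sum_k p k ^+ 2 * \tr (s k *m s k).
  rewrite /chi trbil; apply: eq_bigr => k _.
  rewrite (bigD1 k) //= big1 ?addr0.
    by rewrite tensmx_mul proj_mul // eqxx scale1r tr_tens tr_proj // mul1r expr2.
  by move=> l lk; rewrite tensmx_mul proj_mul // eq_sym (negbTE lk) scale0r tens0mx
      mxtrace0 mulr0.
have hk k : \tr ((r k - p k *: s k) *m (r k - p k *: s k)) =
    \tr (r k *m r k) - 2 * (p k * \tr (s k *m r k)) + p k ^+ 2 * \tr (s k *m s k).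
  rewrite mulmxBl !mulmxBr -!scalemxAl -!scalemxAr !raddfB /= !mxtraceZ.
  rewrite [\tr (r k *m s k)]mxtrace_mulC; ring.
rewrite /hs_dist2 mulmxBl !mulmxBr !raddfB /= [\tr (rho *m chi)]mxtrace_mulC hcr hcc.
under [X in _ = _ + X]eq_bigr do rewrite hk.
rewrite /r big_split /= sumrB -mulr_sumr; ring.
Qed.

End Gen.

Section Main.
Variable C : numClosedFieldType.
Variables (m n : nat) (lA : 'I_(m ^ 2 - 1) -> 'M[C]_m) (lB : 'I_(n ^ 2 - 1) -> 'M[C]_n)
  (rho : 'M[C]_(m * n)).
Hypotheses (m0 : (0 < m)%N) (n0 : (0 < n)%N) (sA : su_generators lA) (sB : su_generators lB)
  (hrho : Defs.hermitian rho).

Let rA i := red (lA i) rho.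
Definition Fe (e : 'I_m -> 'cV[C]_m) :=
  \sum_k \tr (red (proj (e k)) rho *m red (proj (e k)) rho).
Let G := Gmx lA lB rho.

Let mnz : (m%:R : C) != 0. Proof. by rewrite pnatr_eq0 -lt0n. Qed.
Let nnz : (n%:R : C) != 0. Proof. by rewrite pnatr_eq0 -lt0n. Qed.
Let tnz : (2 : C) != 0. Proof. by rewrite pnatr_eq0. Qed.
Let fnz : (4 : C) != 0. Proof. by rewrite pnatr_eq0. Qed.
Let mnnz : ((m ^ 2 * n)%:R : C) != 0.
Proof. by rewrite pnatr_eq0 muln_eq0 expn_eq0 negb_or negb_and -!lt0n m0 n0. Qed.

Lemma xE i : xvec lA rho i 0 = m%:R / 2 * \tr (rA i).
Proof. by rewrite /xvec mxE T1 mul1mx. Qed.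

Lemma tE i j : corrmx lA lB rho i j = (m * n)%:R / 4 * \tr (lB j *m rA i).
Proof. by rewrite /corrmx mxE T1. Qed.

Lemma GentE i l : G i l = xvec lA rho i 0 * xvec lA rho l 0
  + 2 / n%:R * \sum_j corrmx lA lB rho i j * corrmx lA lB rho l j.
Proof.
rewrite /G /Gmx !mxE big_ord1 !mxE; congr (_ + _ * _).
by apply: eq_bigr => j _; rewrite [_^T _ _]mxE.
Qed.

Lemma GE i l : \tr (rA i *m rA l) = 4 / (m ^ 2 * n)%:R * G i l.
Proof.
rewrite GentE (parseval n0 sB) !xE mulrDr; congr (_ + _).
  by rewrite natrM natrX; field; rewrite ?mnz ?nnz ?tnz ?fnz.
by rewrite mulrA [RHS]mulr_sumr; apply: eq_bigr => j _; rewrite !tE natrM natrX; field; rewrite ?mnz ?nnz ?tnz ?fnz.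
Qed.

Lemma herm_rA i : Defs.hermitian (rA i).
Proof. by apply: herm_red => //; case: sA. Qed.

Lemma G_real i l : G i l \is Num.real.
Proof.
have rn (a b : nat) : (a%:R / b%:R : C) \is Num.real.
  by apply: rpred_div; apply: rpred_nat.
have xr k : xvec lA rho k 0 \is Num.real.
  rewrite xE; apply: rpredM; first exact: rn.
  exact/tr_herm_real/herm_rA.
have tr k j : corrmx lA lB rho k j \is Num.real.
  rewrite tE; apply: rpredM; first exact: rn.
  by apply: tr_mul_herm_real; [case: sB | apply: herm_rA].
rewrite GentE; apply: rpredD; first exact: rpredM.
apply: rpredM; first exact: rn.
by apply: rpred_sum => j _; apply: rpredM.
Qed.

Lemma bformE p (u v : 'cV[C]_p) (M : 'M[C]_p) :
  (u^T *m M *m v) 0 0 = \sum_i \sum_l u i 0 * M i l * v l 0.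
Proof.
rewrite mxE exchange_big /=; apply: eq_bigr => i _.
rewrite mxE big_distrl /=; apply: eq_bigr => l _.
by rewrite mxE.
Qed.

Lemma scoreE (alpha : 'I_m -> 'cV[C]_(m ^ 2 - 1)) :
  basis_score G alpha = 2 / m%:R ^+ 2 *
    \sum_k \sum_i \sum_l alpha k i 0 * G i l * alpha k l 0.
Proof.
rewrite /basis_score mulr_sumr; apply: eq_bigr => k _ /=.
rewrite bformE mulr_sumr; apply: eq_bigr => i _.
rewrite mulr_sumr; apply: eq_bigr => l _.
rewrite !mxE.
have -> : 2 / m%:R ^+ 2 = (sqrtC 2 / m%:R) ^+ 2 :> C by rewrite expr_div_n sqrtCK.
ring.
Qed.


Lemma Dform (e : 'I_m -> 'cV[C]_m) (alpha : 'I_m -> 'cV[C]_(m ^ 2 - 1)) :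
  orthonormal_basis e -> (forall k, coherence_vector lA (proj (e k)) (alpha k)) ->
  \tr (rho *m rho) - Fe e = 2 / (m ^ 2 * n)%:R * (\tr G - basis_score G alpha).
Proof.
move=> oe coh.
have al k i : alpha k i 0 = m%:R / 2 * \tr (lA i *m proj (e k)).
  exact: (alpha_tr m0 sA (coh k)).
have sa i : \sum_k alpha k i 0 = 0.
  rewrite (eq_bigr _ (fun k _ => al k i)) -mulr_sumr -raddf_sum /= -mulmx_sumr.
  by rewrite sum_proj // mulmx1; case: sA => _ -> _; rewrite mulr0.
set r0 := red 1%:M rho.
set Y := fun k => \sum_i alpha k i 0 *: rA i.
have rk k : red (proj (e k)) rho = m%:R^-1 *: (r0 + Y k).
  rewrite {1}(coh k).2 red_scale red_add red_sum /Y; congr (_ *: (_ + _)).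
  by apply: eq_bigr => i _; rewrite red_scale.
pose q k := \sum_i \sum_l alpha k i 0 * G i l * alpha k l 0.
have YY k : \tr (Y k *m Y k) = 4 / (m ^ 2 * n)%:R * q k.
  rewrite /Y trbil /q mulr_sumr; apply: eq_bigr => i _.
  rewrite mulr_sumr; apply: eq_bigr => l _; rewrite GE; ring.
have X1 : \sum_k \tr (r0 *m Y k) = 0.
  transitivity (\sum_i (\sum_k alpha k i 0) * \tr (r0 *m rA i)); last first.
    by rewrite big1 // => i _; rewrite sa mul0r.
  rewrite /Y; under eq_bigr do rewrite mulmx_sumr raddf_sum /=.
  under eq_bigr do under eq_bigr do rewrite -scalemxAr mxtraceZ.
  by rewrite exchange_big /=; apply: eq_bigr => i _; rewrite mulr_suml.
have X2 : \sum_k \tr (Y k *m r0) = 0.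
  by rewrite -[RHS]X1; apply: eq_bigr => k _; rewrite mxtrace_mulC.
have Fk k : \tr (red (proj (e k)) rho *m red (proj (e k)) rho) =
    m%:R^-2 * (\tr (r0 *m r0) + \tr (r0 *m Y k) + \tr (Y k *m r0)
               + 4 / (m ^ 2 * n)%:R * q k).
  rewrite rk -scalemxAl -scalemxAr !mxtraceZ !(mulmxDl, mulmxDr) !mxtraceD YY.
  by rewrite mulrA -expr2 exprVn; ring.
have FE : Fe e = m%:R^-2 * (m%:R * \tr (r0 *m r0) + 4 / (m ^ 2 * n)%:R * \sum_k q k).
  rewrite /Fe (eq_bigr _ (fun k _ => Fk k)) -mulr_sumr !big_split /= X1 X2.
  by rewrite sumr_const card_ord -mulr_sumr !addr0 [m%:R * _]mulr_natl.
have TG : \sum_i \tr (rA i *m rA i) / 2 = 2 / (m ^ 2 * n)%:R * \tr G.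
  have -> : \tr G = \sum_i G i i by [].
  rewrite [RHS]mulr_sumr; apply: eq_bigr => i _; rewrite GE.
  by field; rewrite ?mnz ?nnz ?tnz ?fnz ?mnnz.
rewrite (T2 rho rho m0 sA) -/r0 FE TG scoreE.
rewrite natrM natrX.
by field; rewrite ?mnz ?nnz.
Qed.

End Main.

Section Gen2.
Variable C : numClosedFieldType.

Definition tv m n (v : 'cV[C]_m) (w : 'cV[C]_n) : 'cV[C]_(m * n) :=
  \col_r (v (mxtens_unindex r).1 0 * w (mxtens_unindex r).2 0).

Lemma qform_red m n (v : 'cV[C]_m) (w : 'cV[C]_n) (rho : 'M[C]_(m * n)) :
  (adjmx w *m red (proj v) rho *m w) 0 0 = (adjmx (tv v w) *m rho *m tv v w) 0 0.
Proof.
rewrite !qformE sum_idx.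
transitivity (\sum_a \sum_b \sum_c \sum_d Num.conj (v a 0 * w b 0)
   * rho (mxtens_index (a,b)) (mxtens_index (c,d)) * (v c 0 * w d 0)); last first.
  apply: eq_bigr => a _; apply: eq_bigr => b _; rewrite sum_idx.
  by apply: eq_bigr => c _; apply: eq_bigr => d _; rewrite !mxE !mxtens_indexK.
transitivity (\sum_b \sum_d \sum_a \sum_c Num.conj (v a 0 * w b 0)
   * rho (mxtens_index (a,b)) (mxtens_index (c,d)) * (v c 0 * w d 0)).
  apply: eq_bigr => b _; apply: eq_bigr => d _.
  rewrite mxE big_distrr big_distrl /=; apply: eq_bigr => a _.
  rewrite big_distrr big_distrl /=; apply: eq_bigr => c _.
  rewrite /proj mxE big_ord1 adjmxE rmorphM /=; ring.
under eq_bigr do rewrite exchange_big.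
under eq_bigr do under eq_bigr do rewrite exchange_big.
by rewrite exchange_big.
Qed.

Lemma psd_red m n (v : 'cV[C]_m) (rho : 'M[C]_(m * n)) : psd rho -> psd (red (proj v) rho).
Proof. by move=> h w; rewrite qform_red. Qed.

Lemma tens11 m n : (1%:M : 'M[C]_m) *t (1%:M : 'M[C]_n) = 1%:M.
Proof.
apply/matrixP => i j.
case: (mxtens_indexP i) => a b; case: (mxtens_indexP j) => c d.
rewrite tensmxE !mxE (inj_eq (can_inj (@mxtens_indexK m n))) xpair_eqE.
by rewrite -natrM mulnb.
Qed.

Lemma tr_red1 m n (rho : 'M[C]_(m * n)) : \tr (red 1%:M rho) = \tr rho.
Proof. by have := T1 1%:M 1%:M rho; rewrite tens11 !mul1mx. Qed.

Lemma psd_tr_ge0 p (M : 'M[C]_p) : psd M -> 0 <= \tr M.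
Proof. by move=> h; apply: sumr_ge0 => i _; apply: psd_diag. Qed.

Lemma psd_tr0 p (M : 'M[C]_p) : Defs.hermitian M -> psd M -> \tr M = 0 -> M = 0.
Proof.
move=> hM pM t0; apply: psd0 => // b.
by apply: (psumr_eq0P _ t0) => // i _; apply: psd_diag.
Qed.

Lemma psd_proj p (u : 'cV[C]_p) : psd (proj u).
Proof.
move=> v; rewrite /proj mulmxA -mulmxA.
have -> : adjmx v *m u *m (adjmx u *m v) = ((adjmx v *m u) 0 0 * (adjmx u *m v) 0 0)%:M.
  by apply/matrixP => i j; rewrite !ord1 [LHS]mxE big_ord1 [RHS]mxE /= mulr1n.
rewrite mxE /= mulr1n.
have -> : (adjmx u *m v) 0 0 = Num.conj ((adjmx v *m u) 0 0).
  rewrite !mxE rmorph_sum; apply: eq_bigr => i _.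
  by rewrite rmorphM !adjmxE /= conjCK mulrC.
exact: mul_conjC_ge0.
Qed.

Lemma adjmxB p q (A B : 'M[C]_(p,q)) : adjmx (A - B) = adjmx A - adjmx B.
Proof. by apply/matrixP => i j; rewrite !(mxE, adjmxE) rmorphB. Qed.

Lemma herm_sub_scale p (A B : 'M[C]_p) (c : C) :
  Defs.hermitian A -> Defs.hermitian B -> c \is Num.real -> Defs.hermitian (A - c *: B).
Proof.
by move=> hA hB cr; rewrite /Defs.hermitian adjmxB adjmxZ conj_Creal // hA hB.
Qed.

End Gen2.


Section Final.
Variable C : numClosedFieldType.

Lemma main_gen m n (lA : 'I_(m ^ 2 - 1) -> 'M[C]_m) (lB : 'I_(n ^ 2 - 1) -> 'M[C]_n)
    (rho : 'M[C]_(m * n)) (e0 : 'I_m -> 'cV[C]_m) :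
  (0 < m)%N -> (0 < n)%N ->
  su_generators lA -> su_generators lB -> state rho -> orthonormal_basis e0 ->
  (forall e, orthonormal_basis e -> Fe rho e <= Fe rho e0) ->
  let G := Gmx lA lB rho in
  exists (chi0 : 'M[C]_(m * n)) (e0 : 'I_m -> 'cV[C]_m)
         (alpha0 : 'I_m -> 'cV[C]_(m ^ 2 - 1)),
    [/\ zero_discord chi0,
        (forall chi, zero_discord chi -> hs_dist2 rho chi0 <= hs_dist2 rho chi),
        orthonormal_basis e0 /\ (forall k, coherence_vector lA (proj (e0 k)) (alpha0 k)),
        (forall (e : 'I_m -> 'cV[C]_m) (alpha : 'I_m -> 'cV[C]_(m ^ 2 - 1)),
            orthonormal_basis e -> (forall k, coherence_vector lA (proj (e k)) (alpha k)) ->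
            basis_score G alpha <= basis_score G alpha0) &
        hs_dist2 rho chi0
          = 2 / ((m ^ 2 * n)%:R) * (\tr G - basis_score G alpha0)].
Proof.
move=> m0 n0 sA sB [hrho prho tr1] oe0 maxF G.
have mnz : (m%:R : C) != 0 by rewrite pnatr_eq0 -lt0n.
have tnz : (2 : C) != 0 by rewrite pnatr_eq0.
set r := fun k => red (proj (e0 k)) rho.
have hr k : Defs.hermitian (r k) by apply: herm_red => //; apply: herm_proj.
have pr k : psd (r k) by apply: psd_red.
pose pk k := \tr (r k).
have pk_ge0 k : 0 <= pk k by apply: psd_tr_ge0.
have pk_sum : \sum_k pk k = 1.
  by rewrite /pk /r -raddf_sum /= -red_sum sum_proj // tr_red1.
pose i0 : 'I_n := Ordinal n0.
pose s0 : 'M[C]_n := proj (delta_mx i0 0).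
pose sig k := if pk k == 0 then s0 else (pk k)^-1 *: r k.
have psig k : pk k *: sig k = r k.
  rewrite /sig; case: eqP => [h|nz].
    by rewrite h scale0r; symmetry; apply: psd_tr0.
  by rewrite scalerA divff ?scale1r //; apply/eqP.
have ssig k : state (sig k).
  rewrite /sig; case: eqP => [h|nz].
    split; [exact: herm_proj | exact: psd_proj |].
    by rewrite /s0 /proj mxtrace_mulC adj_delta mul_delta_mx /mxtrace big_ord1 mxE !eqxx.
  have rp : (pk k)^-1 \is Num.real by rewrite rpredV; apply: ger0_real.
  split.
  - by rewrite /Defs.hermitian adjmxZ conj_Creal // hr.
  - move=> v; rewrite -scalemxAr -scalemxAl mxE00Z; apply: mulr_ge0.
      by rewrite invr_ge0.
    exact: pr.
  - by rewrite mxtraceZ mulVf //; apply/eqP.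
pose chi0 := \sum_k pk k *: (proj (e0 k) *t sig k).
have zd0 : zero_discord chi0 by exists e0, pk, sig; split.
have hs0 : hs_dist2 rho chi0 = \tr (rho *m rho) - Fe rho e0.
  rewrite dist_decomp // [X in _ + X]big1 ?addr0 // => k _.
  by rewrite -/(r k) psig subrr mul0mx mxtrace0.
pose alpha0 k : 'cV[C]_(m ^ 2 - 1) := \col_i (m%:R / 2 * \tr (lA i *m proj (e0 k))).
have coh0 k : coherence_vector lA (proj (e0 k)) (alpha0 k).
  split.
    move=> i; rewrite mxE; apply: rpredM.
      by apply: rpred_div; apply: rpred_nat.
    by apply: tr_mul_herm_real; [case: sA | apply: herm_proj].
  rewrite {1}(complete m0 sA (proj (e0 k))) tr_proj // scalerDr scaler_sumr.
  congr (_ + _); first by rewrite mul1r.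
  apply: eq_bigr => i _; rewrite scalerA mxE; congr (_ *: _).
  by field.
have D0 := Dform rho m0 n0 sA sB oe0 coh0.
exists chi0, e0, alpha0; split => //.
- move=> chi [e [p [s [oe pge psum sst ->]]]].
  rewrite hs0 dist_decomp //.
  apply: (@le_trans _ _ (\tr (rho *m rho) - Fe rho e)).
    by apply: lerB => //; apply: maxF.
  rewrite lerDl; apply: sumr_ge0 => k _; apply: trsq_ge0.
  apply: herm_sub_scale; first by apply: herm_red => //; apply: herm_proj.
    by case: (sst k).
  exact: ger0_real.
- move=> e alpha oe coh.
  have D1 := Dform rho m0 n0 sA sB oe coh.
  have cpos : (0 : C) < 2 / (m ^ 2 * n)%:R.
    by rewrite divr_gt0 ?ltr0n // muln_gt0 expn_gt0 m0 n0.
  have : Fe rho e0 - Fe rho e = 2 / (m ^ 2 * n)%:R * (basis_score G alpha0 - basis_score G alpha).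
    have -> : Fe rho e0 - Fe rho e = (\tr (rho *m rho) - Fe rho e) - (\tr (rho *m rho) - Fe rho e0).
      by ring.
    by rewrite D1 D0 -/G; ring.
  have := maxF e oe; rewrite -subr_ge0 => + h; rewrite h pmulr_rge0 // subr_ge0.
  done.
- by rewrite hs0 D0.
Qed.

End Final.

Module Ana.
Import boolp classical_sets all_analysis.
Import numFieldNormedType.Exports.
Local Open Scope classical_set_scope.
Local Open Scope ring_scope.

Section A.
Variable R : realType.
Variable K : nat.
Local Notation V := 'rV[R]_K.

Definition cc (f : V -> R[i]) :=
  continuous (fun v => complex.Re (f v)) /\ continuous (fun v => complex.Im (f v)).

Lemma ReD (x y : R[i]) : complex.Re (x + y) = complex.Re x + complex.Re y.
Proof. by case: x; case: y. Qed.
Lemma ImD (x y : R[i]) : complex.Im (x + y) = complex.Im x + complex.Im y.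
Proof. by case: x; case: y. Qed.
Lemma ReM (x y : R[i]) : complex.Re (x * y) = complex.Re x * complex.Re y - complex.Im x * complex.Im y.
Proof. by case: x; case: y. Qed.
Lemma ImM (x y : R[i]) : complex.Im (x * y) = complex.Re x * complex.Im y + complex.Im x * complex.Re y.
Proof. by case: x => a b; case: y => c d. Qed.
Lemma ReJ (x : R[i]) : complex.Re (Num.conj x) = complex.Re x.
Proof. by case: x. Qed.
Lemma ImJ (x : R[i]) : complex.Im (Num.conj x) = - complex.Im x.
Proof. by case: x. Qed.

Lemma cc_ext f g : (forall v, f v = g v) -> cc f -> cc g.
Proof. by move=> h; rewrite (_ : g = f) //; apply: funext => v; rewrite h. Qed.

Lemma cc_cst c : cc (fun=> c).
Proof. by split; apply: cst_continuous. Qed.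

Lemma cc_add f g : cc f -> cc g -> cc (fun v => f v + g v).
Proof.
move=> [f1 f2] [g1 g2]; split.
  under eq_fun do rewrite ReD.
  by move=> x; exact: (cvgD (f1 x) (g1 x)).
under eq_fun do rewrite ImD.
by move=> x; exact: (cvgD (f2 x) (g2 x)).
Qed.

Lemma cc_mul f g : cc f -> cc g -> cc (fun v => f v * g v).
Proof.
move=> [f1 f2] [g1 g2]; split.
  under eq_fun do rewrite ReM.
  by move=> x; exact: (cvgB (cvgM (f1 x) (g1 x)) (cvgM (f2 x) (g2 x))).
under eq_fun do rewrite ImM.
by move=> x; exact: (cvgD (cvgM (f1 x) (g2 x)) (cvgM (f2 x) (g1 x))).
Qed.

Lemma cc_conj f : cc f -> cc (fun v => Num.conj (f v)).
Proof.
move=> [f1 f2]; split.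
  by under eq_fun do rewrite ReJ.
under eq_fun do rewrite ImJ.
by move=> x; exact: (cvgN (f2 x)).
Qed.

Lemma cc_sum I (r : seq I) (P : pred I) (F : I -> V -> R[i]) :
  (forall i, cc (F i)) -> cc (fun v => \sum_(i <- r | P i) F i v).
Proof.
move=> h; elim: r => [|x r IH].
  by apply: (cc_ext (f := fun=> 0)) => [v|]; [rewrite big_nil | exact: cc_cst].
case: (boolP (P x)) => Px.
  apply: (cc_ext (f := fun v => F x v + \sum_(i <- r | P i) F i v)).
    by move=> v; rewrite big_cons Px.
  exact: cc_add.
by apply: (cc_ext _ IH) => v; rewrite big_cons (negbTE Px).
Qed.

Definition ccM p q (M : V -> 'M[R[i]]_(p,q)) := forall i j, cc (fun v => M v i j).

Lemma ccM_cst p q (M : 'M[R[i]]_(p,q)) : ccM (fun=> M).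
Proof. by move=> i j; exact: cc_cst. Qed.

Lemma ccM_mul p q r (A : V -> 'M[R[i]]_(p,q)) (B : V -> 'M[R[i]]_(q,r)) :
  ccM A -> ccM B -> ccM (fun v => A v *m B v).
Proof.
move=> hA hB i j; apply: (cc_ext (f := fun v => \sum_k A v i k * B v k j)).
  by move=> v; rewrite mxE.
by apply: cc_sum => k; apply: cc_mul.
Qed.

Lemma ccM_adj p q (A : V -> 'M[R[i]]_(p,q)) : ccM A -> ccM (fun v => adjmx (A v)).
Proof.
move=> hA i j; apply: (cc_ext (f := fun v => Num.conj (A v j i))).
  by move=> v; rewrite adjmxE.
exact: cc_conj.
Qed.

Lemma ccM_red m n (X : V -> 'M[R[i]]_m) (rho : 'M[R[i]]_(m * n)) :
  ccM X -> ccM (fun v => red (X v) rho).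
Proof.
move=> hX b d; apply: (cc_ext (f := fun v => \sum_a \sum_c X v c a
   * rho (mxtens_index (a,b)) (mxtens_index (c,d)))).
  by move=> v; rewrite mxE.
apply: cc_sum => a; apply: cc_sum => c; apply: cc_mul => //; exact: cc_cst.
Qed.

Lemma cc_tr p (A : V -> 'M[R[i]]_p) : ccM A -> cc (fun v => \tr (A v)).
Proof. by move=> hA; apply: cc_sum => i. Qed.

End A.

Section B.
Variable R : realType.
Variables (m n : nat) (rho : 'M[R[i]]_(m * n)).
Hypothesis hrho : Defs.hermitian rho.
Local Notation K := (m * m + m * m)%N.
Local Notation V := 'rV[R]_K.

Definition ev (v : V) (k : 'I_m) : 'cV[R[i]]_m :=
  \col_a (Complex (v 0 (lshift (m * m) (mxtens_index (a,k))))
                  (v 0 (rshift (m * m) (mxtens_index (a,k))))).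

Definition ve (e : 'I_m -> 'cV[R[i]]_m) : V :=
  row_mx (\row_r complex.Re (e (mxtens_unindex r).2 (mxtens_unindex r).1 0))
         (\row_r complex.Im (e (mxtens_unindex r).2 (mxtens_unindex r).1 0)).

Lemma ev_ve e k : ev (ve e) k = e k.
Proof.
apply/matrixP => a j; rewrite !ord1 mxE /ve row_mxEl row_mxEr !mxE mxtens_indexK /=.
by case: (e k a 0).
Qed.

Lemma ccM_ev k : ccM (fun v : V => ev v k).
Proof.
move=> a j; split.
  rewrite (_ : (fun v => _) = (fun v : V => v 0 (lshift (m * m) (mxtens_index (a,k))))).
    exact: coord_continuous.
  by apply: funext => v; rewrite mxE.
rewrite (_ : (fun v => _) = (fun v : V => v 0 (rshift (m * m) (mxtens_index (a,k))))).
  exact: coord_continuous.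
by apply: funext => v; rewrite mxE.
Qed.

Lemma cc_Fe : cc (fun v : V => Fe rho (ev v)).
Proof.
rewrite /Fe /proj; apply: cc_sum => k; apply: cc_tr; apply: ccM_mul;
  apply: ccM_red; apply: ccM_mul; [exact: ccM_ev | apply: ccM_adj; exact: ccM_ev
  | exact: ccM_ev | apply: ccM_adj; exact: ccM_ev].
Qed.

Lemma cc_ip k l : cc (fun v : V => (adjmx (ev v k) *m ev v l) 0 0).
Proof. by apply: ccM_mul; [apply: ccM_adj|]; apply: ccM_ev. Qed.


Lemma Fe_ext (e e' : 'I_m -> 'cV[R[i]]_m) : (forall k, e k = e' k) -> Fe rho e = Fe rho e'.
Proof. by move=> h; rewrite /Fe; apply: eq_bigr => k _; rewrite h. Qed.

Lemma orth_ext (e e' : 'I_m -> 'cV[R[i]]_m) :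
  (forall k, e k = e' k) -> orthonormal_basis e -> orthonormal_basis e'.
Proof. by move=> h oe k l; rewrite -!h. Qed.

Lemma Im_real (x : R[i]) : x \is Num.real -> complex.Im x = 0.
Proof. by case: x => a b; rewrite complex_real => /eqP. Qed.

Lemma ceq (x y : R[i]) : complex.Re x = complex.Re y -> complex.Im x = complex.Im y -> x = y.
Proof. by case: x => a b; case: y => c d /= -> ->. Qed.

Lemma Re_nat (k : nat) : complex.Re (k%:R : R[i]) = k%:R.
Proof. by elim: k => // k IH; rewrite -addn1 !natrD ReD IH. Qed.

Lemma Im_nat (k : nat) : complex.Im (k%:R : R[i]) = 0.
Proof. by elim: k => // k IH; rewrite -addn1 !natrD ImD IH add0r. Qed.

Definition Sbox : set V := [set v | forall r, (fun _ : 'I_K => (`[-1, 1])%classic : set R) r (v ord0 r)].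
Definition Sorth : set V := [set v | orthonormal_basis (ev v)].

Lemma Sbox_compact : compact Sbox.
Proof. by apply: rV_compact => r; apply: segment_compact. Qed.

Lemma Sorth_closed : closed Sorth.
Proof.
have -> : Sorth = \bigcap_(kl in [set: 'I_m * 'I_m])
   ((fun v : V => complex.Re ((adjmx (ev v kl.1) *m ev v kl.2) 0 0)) @^-1` [set x | x = (kl.1 == kl.2)%:R]
    `&` (fun v : V => complex.Im ((adjmx (ev v kl.1) *m ev v kl.2) 0 0)) @^-1` [set x | x = 0]).
  apply/seteqP; split.
    move=> v ov [k l] _ /=; rewrite ov; split; [exact: Re_nat | exact: Im_nat].
  move=> v h k l; have [/= h1 h2] := h (k, l) I.
  by apply: ceq; rewrite ?h1 ?h2 ?Re_nat ?Im_nat.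
apply: closed_bigI => kl _; apply: closedI.
  by apply: (proj1 (continuous_closedP _) (cc_ip kl.1 kl.2).1); apply: closed_eq.
by apply: (proj1 (continuous_closedP _) (cc_ip kl.1 kl.2).2); apply: closed_eq.
Qed.


Lemma Re_sum I (r : seq I) (P : pred I) (F : I -> R[i]) :
  complex.Re (\sum_(i <- r | P i) F i) = \sum_(i <- r | P i) complex.Re (F i).
Proof.
elim: r => [|x r IH]; first by rewrite !big_nil.
by rewrite !big_cons; case: (P x); rewrite ?ReD IH.
Qed.

Lemma norm_le1 (e : 'I_m -> 'cV[R[i]]_m) k a : orthonormal_basis e ->
  complex.Re (e k a 0) ^+ 2 + complex.Im (e k a 0) ^+ 2 <= 1.
Proof.
move=> oe; have := oe k k; rewrite eqxx mxE => /(congr1 (@complex.Re R)).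
rewrite Re_sum Re_nat /= mulr1n => <-.
rewrite (bigD1 a) //= adjmxE ReM ReJ ImJ -!expr2 mulNr opprK.
rewrite lerDl; apply: sumr_ge0 => b _.
by rewrite adjmxE ReM ReJ ImJ mulNr opprK -!expr2 addr_ge0 ?sqr_ge0.
Qed.

Lemma ve_box e : orthonormal_basis e -> Sbox (ve e).
Proof.
move=> oe r; rewrite /= in_itv /=.
case: (split_ordP r) => j -> ; rewrite /ve ?row_mxEl ?row_mxEr !mxE.
  have := norm_le1 (mxtens_unindex j).2 (mxtens_unindex j).1 oe.
  set x := complex.Re _; set y := complex.Im _ => h.
  by apply/andP; split; nra.
have := norm_le1 (mxtens_unindex j).2 (mxtens_unindex j).1 oe.
set x := complex.Re _; set y := complex.Im _ => h.
by apply/andP; split; nra.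
Qed.


Lemma Fe_real (e : 'I_m -> 'cV[R[i]]_m) : Fe rho e \is Num.real.
Proof.
apply: rpred_sum => k _; apply: trsq_real; apply: herm_red => //; exact: herm_proj.
Qed.

Lemma exists_max : (0 < m)%N -> exists e0 : 'I_m -> 'cV[R[i]]_m,
  orthonormal_basis e0 /\ forall e, orthonormal_basis e -> Fe rho e <= Fe rho e0.
Proof.
move=> m0.
pose S := Sbox `&` Sorth.
have cS : compact S := compact_closedI Sbox_compact Sorth_closed.
pose es (k : 'I_m) : 'cV[R[i]]_m := delta_mx k 0.
have oes : orthonormal_basis es.
  by move=> k l; rewrite /es -(mulmx1 (adjmx _)) qdelta mxE.
have inS e : orthonormal_basis e -> S (ve e).
  move=> oe; split; first exact: ve_box.
  by apply: (orth_ext (fun k => esym (ev_ve e k))).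
have S0 : S !=set0 by exists (ve es); apply: inS.
have [v0 Sv0 hmax] := EVT_max_rV S0 cS (continuous_subspaceT cc_Fe.1).
rewrite inE in Sv0.
exists (ev v0); split; first by case: Sv0.
move=> e oe.
have := hmax (ve e); rewrite inE => /(_ (inS e oe)).
rewrite (Fe_ext (ev_ve e)) => h.
by rewrite lecE !Im_real ?Fe_real // eqxx h.
Qed.

End B.
End Ana.

Unset Implicit Arguments.

Theorem mainTheorem6 (R : realType) (m n : nat)
    (lA : 'I_(m ^ 2 - 1) -> 'M[R[i]]_m) (lB : 'I_(n ^ 2 - 1) -> 'M[R[i]]_n)
    (rho : 'M[R[i]]_(m * n)) :
  su_generators lA -> su_generators lB -> state rho ->
  let G := Gmx lA lB rho in
  exists (chi0 : 'M[R[i]]_(m * n)) (e0 : 'I_m -> 'cV[R[i]]_m)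
         (alpha0 : 'I_m -> 'cV[R[i]]_(m ^ 2 - 1)),
    [/\ zero_discord chi0,
        (forall chi, zero_discord chi -> hs_dist2 rho chi0 <= hs_dist2 rho chi),
        orthonormal_basis e0 /\ (forall k, coherence_vector lA (proj (e0 k)) (alpha0 k)),
        (forall (e : 'I_m -> 'cV[R[i]]_m) (alpha : 'I_m -> 'cV[R[i]]_(m ^ 2 - 1)),
            orthonormal_basis e -> (forall k, coherence_vector lA (proj (e k)) (alpha k)) ->
            basis_score G alpha <= basis_score G alpha0) &
        hs_dist2 rho chi0
          = 2 / ((m ^ 2 * n)%:R) * (\tr G - basis_score G alpha0)].
Proof.
move=> sA sB st.
have mn0 : (0 < m * n)%N.
  rewrite lt0n; apply/eqP => h; case: st => _ _.
  rewrite /mxtrace big1 => [/eqP|i]; first by rewrite eq_sym oner_eq0.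
  by have := ltn_ord i; rewrite {2}h.
have m0 : (0 < m)%N by move: mn0; rewrite muln_gt0 => /andP[].
have n0 : (0 < n)%N by move: mn0; rewrite muln_gt0 => /andP[].
have [e0 [oe0 mx]] := @Ana.exists_max R m n rho (let: And3 h _ _ := st in h) m0.
exact: (main_gen m0 n0 sA sB st oe0 mx).
Qed.
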